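(* Consider a stochastic non-zero-sum game $(\mathcal{P}^D)$ with a partially nested information structure and its policy-dependent static reduction $(\mathcal{P}^S)$. Then: (i) If a policy $\underline{\gamma}^{D,*}$ is a PL-NE (DM-NE, stationary) for $(\mathcal{P}^D)$, then the policy $\underline{\gamma}^{S,*}$ obtained from it via the policy-dependent static reduction relation is not necessarily a PL-NE (DM-NE, stationary) for $(\mathcal{P}^S)$. (ii) If a policy $\underline{\gamma}^{S,*}$ is a PL-NE (DM-NE, stationary) for $(\mathcal{P}^S)$, then a policy $\underline{\gamma}^{D,*}$ related to it through the policy-dependent static reduction relation is not necessarily a PL-NE (DM-NE, stationary) for $(\mathcal{P}^D)$. (iii) The statement of part (i) remains valid even if, for every fixed $u^D_{\downarrow(i,k)}$, the map $h_{i,k}(\zeta)\mapsto g_{i,k}(h_{i,k}(\zeta),u^D_{\downarrow(i,k)})$ is invertible for all realizations of $\zeta$ (for all $i,k$), each cost $c^i$ is continuously differentiable and jointly convex in all players' actions for every $\omega_0$, and $\underline{\gamma}^{D,*}$ satisfies Condition (C): for all $i\in\mathcal{N}$, $k\in\mathrm{TE}^i$, the composed map $\gamma^D_{i,k}\big(\{g_{j,l}(h_{j,l}(\zeta),u^{\downarrow(j,l)})\}_{(j,l)\in\downarrow(i,k)},\,g_{i,k}(h_{i,k}(\zeta),u^{\downarrow(i,k)})\big)$ is affine in $u^{\downarrow(i,k)}$.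
   Context: Setting: $N$ players, player $i$ consisting of one-shot decision makers DM$^k$, $k\in\mathrm{TE}^i$, acting sequentially; $\zeta=\{\omega_0,\omega_1,\dots,\omega_N\}$ collects all primitive random variables. In $(\mathcal{P}^D)$ (partially nested information structure), DM$^k$ of PL$^i$ observes $y^D_{i,k}=[\,y^D_{\downarrow(i,k)},\ \hat y^D_{i,k}=g_{i,k}(h_{i,k}(\zeta),u^D_{\downarrow(i,k)})\,]$, where $\downarrow(i,k)$ is the set of DMs $(j,l)$ whose actions affect $\hat y^D_{i,k}$ and $y^D_{\downarrow(i,k)}$ are their observations; $g_{i,k},h_{i,k}$ measurable. Costs $J^i(\underline{\gamma}^D)=E[c^i(\omega_0,\gamma^D_1(y^D_1),\dots,\gamma^D_N(y^D_N))]$ with Borel $c^i$. In the policy-dependent static reduction $(\mathcal{P}^S)$ (defined when the invertibility above holds), DMs observe $y^S_{i,k}=[\,y^S_{\downarrow(i,k)},\ \hat y^S_{i,k}=h_{i,k}(\zeta)\,]$ with the same costs, and policies are related by $\gamma^S_{i,k}(y^S_{i,k})=\gamma^D_{i,k}\big(y^D_{\downarrow(i,k)},g_{i,k}(h_{i,k}(\zeta),\gamma^D_{\downarrow(i,k)}(y^D_{\downarrow(i,k)}))\big)$ $P$-a.s. for all $i,k$. Only deterministic (pure) policies are considered. PL-NE: no player can lower its expected cost by unilaterally changing its whole policy; DM-NE: no single DM of a player can lower that player's cost by unilaterally changing its own policy; stationary: for each DM the gradient of the conditional expected cost of its player, given its observation, with respect to its action vanishes at the equilibrium action a.s. *)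

(* Defs.v *)
From mathcomp Require Import all_boot.
From Stdlib Require Import Reals.

Local Open Scope R_scope.

Definition fsum {T : finType} (f : T -> R) : R :=
  foldr (fun x acc => f x + acc) 0 (enum T).

(* DMs are indexed by 'I_nDM in the order in which they act; DM k belongs to
   player [owner k].  The primitive random variables zeta live on the finite
   probability space (Omega, prob); omega0 extracts omega_0 from zeta.
   hobs k = h_k(zeta),   gobs k y u = g_k(y, u)  (depends only on u_{down(k)}),
   down k j  <=>  j \in down(k). *)
Record game := Game {
  nPL : nat;
  nDM : nat;
  owner : 'I_nDM -> 'I_nPL;
  down : 'I_nDM -> 'I_nDM -> bool;
  Omega : finType;
  prob : Omega -> R;
  W0 : Type;
  omega0 : Omega -> W0;
  Obs : eqType;
  hobs : 'I_nDM -> Omega -> Obs;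
  gobs : 'I_nDM -> Obs -> ('I_nDM -> R) -> Obs;
  cost : 'I_nPL -> W0 -> ('I_nDM -> R) -> R
}.

Set Implicit Arguments.
Unset Strict Implicit.
Unset Printing Implicit Defensive.

Section Game.
Variable G : game.

Local Notation DM := ('I_(nDM G)).

(* DM k observes the "hat" observations of the DMs in down(k) and its own:
   y_k = [ y_{down(k)}, yhat_k ]  (with down transitively closed). *)
Definition infoset (k j : DM) : bool := down G k j || (j == k).

Definition partially_nested : Prop :=
  (forall w, 0 <= prob G w) /\
  fsum (prob G) = 1 /\
  (forall k j : DM, down G k j -> (j < k)%nat) /\
  (forall k j l : DM, down G k j -> down G j l -> down G k l) /\
  (forall (k : DM) y (u u' : DM -> R),
      (forall j, down G k j -> u j = u' j) -> gobs G k y u = gobs G k y u') /\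
  (* invertibility of h_k(zeta) |-> g_k(h_k(zeta), u) for every fixed u,
     for all realizations of zeta (needed for the static reduction) *)
  (forall (k : DM) (u : DM -> R) w w',
      gobs G k (hobs G k w) u = gobs G k (hobs G k w') u ->
      hobs G k w = hobs G k w').

Definition obs_eqb (k : DM) (y y' : DM -> Obs G) : bool :=
  [forall j, infoset k j ==> (y j == y' j)].

(* A policy profile; gamma k is the policy of DM k, applied to the full
   observation profile but required (admissibility) to depend only on y_k. *)
Definition policy := DM -> (DM -> Obs G) -> R.

Definition admissible (g : policy) : Prop :=
  forall k y y', obs_eqb k y y' -> g k y = g k y'.

(* Closed-loop outcome in (P^D): observations and actions are computed
   sequentially; 2*nDM+2 rounds of the joint update reach the fixed point. *)
Definition stepD (g : policy) (w : Omega G)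
  (p : ((DM -> Obs G) * (DM -> R))%type) : ((DM -> Obs G) * (DM -> R))%type :=
  (fun k => gobs G k (hobs G k w) p.2, fun k => g k p.1).

Definition outD (g : policy) (w : Omega G) : ((DM -> Obs G) * (DM -> R))%type :=
  iter (2 * nDM G + 2)%nat (stepD g w) (fun k => hobs G k w, fun _ => 0).

Record problem := Problem {
  pobs : policy -> Omega G -> DM -> Obs G;
  pact : policy -> Omega G -> DM -> R
}.

Definition PD : problem :=
  Problem (fun g w => (outD g w).1) (fun g w => (outD g w).2).

(* policy-dependent static reduction (P^S): y^S_k = [y^S_{down k}, h_k(zeta)] *)
Definition PS : problem :=
  Problem (fun _ w => fun l => hobs G l w) (fun g w => fun k => g k (fun l => hobs G l w)).

Definition Jcost (P : problem) (i : 'I_(nPL G)) (g : policy) : R :=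
  fsum (fun w => prob G w * cost G i (omega0 G w) (pact P g w)).

Definition PL_NE (P : problem) (g : policy) : Prop :=
  admissible g /\
  forall (i : 'I_(nPL G)) (g' : policy), admissible g' ->
    (forall k, owner G k <> i -> g' k = g k) ->
    Jcost P i g <= Jcost P i g'.

Definition DM_NE (P : problem) (g : policy) : Prop :=
  admissible g /\
  forall (k : DM) (g' : policy), admissible g' ->
    (forall k', k' <> k -> g' k' = g k') ->
    Jcost P (owner G k) g <= Jcost P (owner G k) g'.

Definition setpol (g : policy) (k : DM) (a : R) : policy :=
  fun k' => if k' == k then (fun _ => a) else g k'.

Definition condcost (P : problem) (g : policy) (k : DM) (w : Omega G) (a : R) : R :=
  fsum (fun w' => if obs_eqb k (pobs P g w') (pobs P g w)
                  then prob G w' * cost G (owner G k) (omega0 G w') (pact P (setpol g k a) w')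
                  else 0)
  / fsum (fun w' => if obs_eqb k (pobs P g w') (pobs P g w) then prob G w' else 0).

Definition stationary (P : problem) (g : policy) : Prop :=
  admissible g /\
  forall (k : DM) (w : Omega G), 0 < prob G w ->
    derivable_pt_lim (condcost P g k w) (pact P g w k) 0.

Definition static_rel (gD gS : policy) : Prop :=
  forall (k : DM) (w : Omega G), 0 < prob G w ->
    gS k (fun l => hobs G l w) = gD k (pobs PD gD w).

Definition affine (F : (DM -> R) -> R) : Prop :=
  exists (a : DM -> R) (b : R), forall u, F u = b + fsum (fun j => a j * u j).

Definition condC (gD : policy) : Prop :=
  forall (k : DM) (w : Omega G),
    affine (fun u => gD k (fun l => gobs G l (hobs G l w) u)).

End Game.

Definition upd (n : nat) (u : 'I_n -> R) (j : 'I_n) (t : R) : 'I_n -> R :=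
  fun l => if l == j then t else u l.

Definition cont_fun (n : nat) (F : ('I_n -> R) -> R) : Prop :=
  forall u eps, 0 < eps -> exists delta, 0 < delta /\
    forall v, (forall j, Rabs (v j - u j) < delta) -> Rabs (F v - F u) < eps.

Definition cont_diff (n : nat) (f : ('I_n -> R) -> R) : Prop :=
  exists D : 'I_n -> ('I_n -> R) -> R,
    (forall j u, derivable_pt_lim (fun t => f (upd u j t)) (u j) (D j u)) /\
    (forall j, cont_fun (D j)).

Definition jointly_convex (n : nat) (f : ('I_n -> R) -> R) : Prop :=
  forall u v t, 0 <= t <= 1 ->
    f (fun l => t * u l + (1 - t) * v l) <= t * f u + (1 - t) * f v.

Inductive eq_notion := PLNE | DMNE | Stationary.

Definition is_eq (nt : eq_notion) (G : game) (P : problem G) (g : policy G) : Prop :=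
  match nt with
  | PLNE => PL_NE P g
  | DMNE => DM_NE P g
  | Stationary => stationary P g
  end.

(* Main.v *)
Require Import Defs.
From mathcomp Require Import all_boot.
From mathcomp Require Import Rstruct.
From Stdlib Require Import Reals Lra FunctionalExtensionality.
From Coquelicot Require Import Coquelicot.
Local Open Scope R_scope.

Lemma fsum_unit (f : unit -> R) : fsum f = f tt + 0.
Proof. rewrite /fsum. by rewrite enumT unlock. Qed.
Lemma fsum_I2 (f : 'I_2 -> R) : fsum f = f ord0 + (f ord_max + 0).
Proof. rewrite /fsum. have -> : enum 'I_2 = [:: ord0; ord_max].
 apply: (inj_map val_inj). by rewrite val_enum_ord. by []. Qed.

Definition o0 : 'I_2 := ord0.
Definition o1 : 'I_2 := ord_max.
Lemma I2_cases (j : 'I_2) : j = o0 \/ j = o1.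
Proof. case: j => [[|[|n]] Hj]; [left|right|]; try (by apply: val_inj). by []. Qed.

Definition cA (x y : R) := (x - 1) * (x - 1) + y * y.
Definition cB (x y : R) := (y - x) * (y - x).
Definition costf (i : 'I_2) (_ : unit) (u : 'I_2 -> R) : R :=
  if i == o0 then cA (u o0) (u o1) else cB (u o0) (u o1).

Definition Gm : game := @Game 2 2 (fun k : 'I_2 => k) (fun k j => (k == o1) && (j == o0)) unit (fun _ => 1)
  unit (fun _ => tt) R (fun _ _ => 0) (fun k y u => if k == o1 then u o0 else y) costf.

Definition Y : 'I_2 -> Obs Gm := fun _ => 0.
Definition Z (a : R) : 'I_2 -> Obs Gm := fun l => if l == o1 then a else 0.

Lemma adm0 (g : policy Gm) y y' : admissible g -> y o0 = y' o0 -> g o0 y = g o0 y'.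
Proof.
move=> Hg H; apply: Hg; apply/forallP => j; apply/implyP.
rewrite /infoset /=. by case: (I2_cases j) => ->; [rewrite H eqxx | ].
Qed.

Lemma adm1 (g : policy Gm) y y' : admissible g -> y o0 = y' o0 -> y o1 = y' o1 -> g o1 y = g o1 y'.
Proof.
move=> Hg H H'; apply: Hg; apply/forallP => j; apply/implyP => _.
by case: (I2_cases j) => ->; [rewrite H eqxx | rewrite H' eqxx].
Qed.

Lemma outD_act (g : policy Gm) : admissible g ->
  (outD g tt).1 o1 = g o0 Y /\
  (outD g tt).2 o0 = g o0 Y /\ (outD g tt).2 o1 = g o1 (Z (g o0 Y)).
Proof.
move=> Hg.
pose I0 (p : ((('I_2 -> Obs Gm) * ('I_2 -> R)))%type) := p.1 o0 = 0 /\ p.2 o0 = g o0 Y.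
have S0 : forall p, I0 p -> I0 (stepD g tt p) /\ (stepD g tt p).1 o1 = g o0 Y.
  move=> p [H1 H2]; split; [split|]; rewrite /=; try done. exact: adm0.
have S1 : forall p, I0 p -> p.1 o1 = g o0 Y -> (stepD g tt p).2 o1 = g o1 (Z (g o0 Y)).
  move=> p [H1 H2] H3 /=. have := (@adm1 g p.1 (Z (g o0 Y)) Hg). apply. by rewrite H1. by rewrite H3.
have P1 : I0 (stepD g tt (fun k => hobs Gm k tt, fun _ => 0)).
  split => //=.
rewrite /outD /=.
have [P2 P2'] := S0 _ P1.
have [P3 P3'] := S0 _ P2.
have P3'' := S1 _ P2 P2'.
have [P4 P4'] := S0 _ P3.
have P4'' := S1 _ P3 P3'.
have [P5 P5'] := S0 _ P4.
have P5'' := S1 _ P4 P4'.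
have [P6 P6'] := S0 _ P5.
have P6'' := S1 _ P5 P5'.
split; first exact P6'. split; first exact P6.2. exact P6''.
Qed.

Lemma JD (g : policy Gm) i : admissible g ->
  Jcost (PD Gm) i g = costf i tt (fun k => if k == o0 then g o0 Y else g o1 (Z (g o0 Y))).
Proof.
move=> Hg; have [_ [H1 H2]] := @outD_act g Hg.
rewrite /Jcost fsum_unit.
have -> : pact (PD Gm) g tt = (fun k => if k == o0 then g o0 Y else g o1 (Z (g o0 Y))).
  apply: functional_extensionality => k; case: (I2_cases k) => ->.
  exact: H1. exact: H2.
rewrite /=. lra.
Qed.

Lemma JS (g : policy Gm) i :
  Jcost (PS Gm) i g = costf i tt (fun k => g k Y).
Proof. rewrite /Jcost fsum_unit. change (prob Gm tt) with 1. rewrite Rmult_1_l Rplus_0_r. by []. Qed.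

Lemma eq00 : (o0 == o0) = true. Proof. by []. Qed.
Lemma eq11 : (o1 == o1) = true. Proof. by []. Qed.
Lemma eq10 : (o1 == o0) = false. Proof. by []. Qed.
Lemma eq01 : (o0 == o1) = false. Proof. by []. Qed.
Lemma n10 : o1 <> o0. Proof. by move/eqP. Qed.
Lemma n01 : o0 <> o1. Proof. by move/eqP. Qed.

Definition pol (c : R) : policy Gm := fun k y => if k == o0 then c else y o1.
Definition cpol (c : R) : policy Gm := fun _ _ => c.

Lemma pol_adm c : admissible (pol c).
Proof.
move=> k y y' H; rewrite /pol; case: (I2_cases k) => Ek; subst k; rewrite ?eq00 ?eq10 //.
move/forallP: H => /(_ o1) /implyP.
by rewrite /infoset eqxx orbT => /(_ isT) /eqP.
Qed.

Lemma cpol_adm c : admissible (cpol c).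
Proof. by []. Qed.

Lemma setpol_adm (g : policy Gm) k a : admissible g -> admissible (setpol g k a).
Proof. move=> Hg k' y y' H; rewrite /setpol; case: (k' == k) => //; exact: Hg. Qed.

Lemma pactD (g : policy Gm) : admissible g ->
  pact (PD Gm) g tt = (fun k => if k == o0 then g o0 Y else g o1 (Z (g o0 Y))).
Proof.
move=> Hg; have [_ [H1 H2]] := @outD_act g Hg.
apply: functional_extensionality => k; case: (I2_cases k) => ->.
exact: H1. exact: H2.
Qed.

Lemma pobsD (g : policy Gm) : admissible g -> pobs (PD Gm) g tt o1 = g o0 Y.
Proof. move=> Hg; have [H _] := @outD_act g Hg. exact: H. Qed.

Lemma obs_refl k (y : 'I_2 -> Obs Gm) : obs_eqb (G:=Gm) k y y.
Proof. by apply/forallP => j; apply/implyP => _; rewrite eqxx. Qed.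

Lemma condcost_eq P (g : policy Gm) k a :
  condcost P g k tt a = costf k tt (pact P (setpol g k a) tt).
Proof.
rewrite /condcost !fsum_unit obs_refl. change (prob Gm tt) with 1.
change (owner Gm k) with k. rewrite Rmult_1_l !Rplus_0_r /Rdiv Rinv_1 Rmult_1_r. by [].
Qed.

Lemma dpoly (f P : R -> R) x l : (forall t, f t = P t) -> is_derive P x l -> derivable_pt_lim f x l.
Proof. move=> E H. apply is_derive_Reals. apply: (is_derive_ext P f); last exact H. move=> t; by rewrite E. Qed.

Lemma sq_ge0 x : 0 <= x * x. Proof. nra. Qed.
Lemma lemA1 a : cA (/2) (/2) <= cA a a.
Proof. rewrite /cA. have h := sq_ge0 (a - /2).
have E : (a-1)*(a-1)+a*a = (/2-1)*(/2-1) + /2 * /2 + 2 * ((a - /2)*(a-/2)) by field.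
rewrite E. lra. Qed.
Lemma lemB0 a b : cB a a <= cB a b.
Proof. rewrite /cB. have h := sq_ge0 (b - a). have E : (a - a) * (a - a) = 0 by ring. lra. Qed.

Ltac simp := rewrite /costf /pol /cpol /Z /setpol /Y ?eq00 ?eq11 ?eq10 ?eq01 /=.

Ltac dsolve := rewrite /cA /cB; auto_derive; [done | lra].

Lemma notstat (f P : R -> R) x l : (forall t, f t = P t) -> is_derive P x l -> l <> 0 ->
  ~ derivable_pt_lim f x 0.
Proof. move=> E H hl D; apply: hl; apply: (uniqueness_limite f x); [exact: (dpoly _ _ _ _ E H) | exact D]. Qed.

Lemma D1_eq nt : is_eq nt (PD Gm) (pol (/2)).
Proof.
case: nt => /=.
- split; first exact: pol_adm. move=> i g' Hg' H. rewrite (JD _ i (pol_adm (/2))) (JD _ i Hg').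
  case: (I2_cases i) => Ei; subst i.
  + have E : forall y, g' o1 y = pol (/2) o1 y by move=> y; rewrite H //; exact: n10.
    rewrite E. simp. exact: lemA1.
  + have E : forall y, g' o0 y = pol (/2) o0 y by move=> y; rewrite H //; exact: n01.
    rewrite !E. simp. exact: lemB0.
- split; first exact: pol_adm. move=> k g' Hg' H. rewrite (JD _ _ (pol_adm (/2))) (JD _ _ Hg').
  change (owner Gm k) with k.
  case: (I2_cases k) => Ek; subst k.
  + have E : forall y, g' o1 y = pol (/2) o1 y by move=> y; rewrite H //; exact: n10.
    rewrite E. simp. exact: lemA1.
  + have E : forall y, g' o0 y = pol (/2) o0 y by move=> y; rewrite H //; exact: n01.
    rewrite !E. simp. exact: lemB0.
- split; first exact: pol_adm. move=> k [] _.
  rewrite (pactD _ (pol_adm (/2))).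
  case: (I2_cases k) => Ek; subst k.
  + apply: (dpoly _ (fun a => cA a a)).
      move=> t; rewrite condcost_eq (pactD _ (setpol_adm _ _ _ (pol_adm _))). by simp.
    simp. dsolve.
  + apply: (dpoly _ (fun a => cB (/2) a)).
      move=> t; rewrite condcost_eq (pactD _ (setpol_adm _ _ _ (pol_adm _))). by simp.
    simp. dsolve.
Qed.

Lemma S1_not nt (gS : policy Gm) : admissible gS -> static_rel (pol (/2)) gS -> ~ is_eq nt (PS Gm) gS.
Proof.
move=> HgS Hrel.
have a0 : gS o0 Y = /2 by rewrite (Hrel o0 tt Rlt_0_1).
have a1 : gS o1 Y = /2.
  rewrite (Hrel o1 tt Rlt_0_1) /pol eq10 (pobsD _ (pol_adm (/2))). by simp.
case: nt => /=.
- move=> [_ Hne].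
  have := Hne o0 (setpol gS o0 1) (setpol_adm _ _ _ HgS).
  rewrite !JS. simp. rewrite /Y in a0 a1. rewrite a0 a1. rewrite /cA.
  move=> h; have : (/2 - 1) * (/2 - 1) + /2 * /2 <= (1 - 1) * (1 - 1) + /2 * /2.
    apply: h => k hk; rewrite /setpol. case: (I2_cases k) => Ek; subst k => //.
  lra.
- move=> [_ Hne].
  have := Hne o0 (setpol gS o0 1) (setpol_adm _ _ _ HgS).
  change (owner Gm o0) with o0.
  rewrite !JS. simp. rewrite /Y in a0 a1. rewrite a0 a1. rewrite /cA.
  move=> h; have : (/2 - 1) * (/2 - 1) + /2 * /2 <= (1 - 1) * (1 - 1) + /2 * /2.
    apply: h => k hk; rewrite /setpol. case: (I2_cases k) => Ek; subst k => //.
  lra.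
- move=> [_ Hst]. have := Hst o0 tt Rlt_0_1.
  change (pact (PS Gm) gS tt o0) with (gS o0 Y). rewrite a0.
  apply: (notstat _ (fun a => cA a (/2)) _ (-1)).
  + move=> t; rewrite condcost_eq. simp. rewrite /Y in a1. by rewrite a1.
  + dsolve.
  + lra.
Qed.

Lemma srel c : static_rel (pol c) (cpol c).
Proof.
move=> k [] _. case: (I2_cases k) => ->.
- by simp.
- rewrite /pol eq10 (pobsD _ (pol_adm c)). by simp.
Qed.

Lemma S2_eq nt : is_eq nt (PS Gm) (cpol 1).
Proof.
case: nt => /=.
- split; first exact: cpol_adm. move=> i g' Hg' H. rewrite !JS.
  case: (I2_cases i) => Ei; subst i.
  + have E : forall y, g' o1 y = cpol 1 o1 y by move=> y; rewrite H //; exact: n10.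
    simp. rewrite E. simp. rewrite /cA. set a := g' o0 _. have := sq_ge0 (a - 1). nra.
  + have E : forall y, g' o0 y = cpol 1 o0 y by move=> y; rewrite H //; exact: n01.
    simp. rewrite !E. simp. exact: lemB0.
- split; first exact: cpol_adm. move=> k g' Hg' H. rewrite !JS.
  change (owner Gm k) with k.
  case: (I2_cases k) => Ek; subst k.
  + have E : forall y, g' o1 y = cpol 1 o1 y by move=> y; rewrite H //; exact: n10.
    simp. rewrite E. simp. rewrite /cA. set a := g' o0 _. have := sq_ge0 (a - 1). nra.
  + have E : forall y, g' o0 y = cpol 1 o0 y by move=> y; rewrite H //; exact: n01.
    simp. rewrite !E. simp. exact: lemB0.
- split; first exact: cpol_adm. move=> k [] _.
  change (pact (PS Gm) (cpol 1) tt k) with 1.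
  case: (I2_cases k) => Ek; subst k.
  + apply: (dpoly _ (fun a => cA a 1)).
      move=> t; rewrite condcost_eq. by simp.
    dsolve.
  + apply: (dpoly _ (fun a => cB 1 a)).
      move=> t; rewrite condcost_eq. by simp.
    dsolve.
Qed.

Lemma D2_not nt : ~ is_eq nt (PD Gm) (pol 1).
Proof.
case: nt => /=.
- move=> [_ Hne].
  have := Hne o0 (setpol (pol 1) o0 (/2)) (setpol_adm _ _ _ (pol_adm 1)).
  rewrite (JD _ _ (pol_adm 1)) (JD _ _ (setpol_adm _ _ _ (pol_adm 1))).
  simp. rewrite /cA.
  move=> h; have : (1 - 1) * (1 - 1) + 1 * 1 <= (/2 - 1) * (/2 - 1) + /2 * /2.
    apply: h => k hk; rewrite /setpol. case: (I2_cases k) => Ek; subst k => //.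
  lra.
- move=> [_ Hne].
  have := Hne o0 (setpol (pol 1) o0 (/2)) (setpol_adm _ _ _ (pol_adm 1)).
  change (owner Gm o0) with o0.
  rewrite (JD _ _ (pol_adm 1)) (JD _ _ (setpol_adm _ _ _ (pol_adm 1))).
  simp. rewrite /cA.
  move=> h; have : (1 - 1) * (1 - 1) + 1 * 1 <= (/2 - 1) * (/2 - 1) + /2 * /2.
    apply: h => k hk; rewrite /setpol. case: (I2_cases k) => Ek; subst k => //.
  lra.
- move=> [_ Hst]. have := Hst o0 tt Rlt_0_1.
  rewrite (pactD _ (pol_adm 1)). simp.
  apply: (notstat _ (fun a => cA a a) _ 2).
  + move=> t; rewrite condcost_eq (pactD _ (setpol_adm _ _ _ (pol_adm _))). by simp.
  + dsolve.
  + lra.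
Qed.

Lemma pn : partially_nested Gm.
Proof.
split; first by move=> _ /=; lra.
split; first by rewrite fsum_unit /=; lra.
split; first by move=> k j /andP [/eqP -> /eqP ->].
split. move=> k j l /andP [_ /eqP ->] /andP [/eqP h _]. by case: (n01 h).
split; last by move=> k u [] [].
move=> k y u u' H /=. case E: (k == o1) => //. apply: H. by rewrite /= E.
Qed.

Definition Dc (i j : 'I_2) (u : 'I_2 -> R) : R :=
  if i == o0 then (if j == o0 then 2 * (u o0 - 1) else 2 * u o1)
  else (if j == o0 then -2 * (u o1 - u o0) else 2 * (u o1 - u o0)).

Lemma costs_reg i w0 : cont_diff (cost Gm i w0) /\ jointly_convex (cost Gm i w0).
Proof.
split.
- exists (Dc i); split.
  + move=> j u. case: (I2_cases i) => ->; case: (I2_cases j) => ->.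
    * apply: (dpoly _ (fun t => cA t (u o1))). move=> t; by rewrite /= /costf /upd /Dc; simp.
      rewrite /Dc; simp; dsolve.
    * apply: (dpoly _ (fun t => cA (u o0) t)). move=> t; by rewrite /= /costf /upd /Dc; simp.
      rewrite /Dc; simp; dsolve.
    * apply: (dpoly _ (fun t => cB t (u o1))). move=> t; by rewrite /= /costf /upd /Dc; simp.
      rewrite /Dc; simp; dsolve.
    * apply: (dpoly _ (fun t => cB (u o0) t)). move=> t; by rewrite /= /costf /upd /Dc; simp.
      rewrite /Dc; simp; dsolve.
  + move=> j u eps he; exists (eps / 4); split; first lra.
    move=> v Hv. have h0 := Rabs_def2 _ _ (Hv o0). have h1 := Rabs_def2 _ _ (Hv o1).
    apply: Rabs_def1; rewrite /Dc;
    case: (I2_cases i) => ->; case: (I2_cases j) => ->; simp; lra.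
- move=> u v t [h0 h1] /=. rewrite /costf.
  have ht : 0 <= t * (1 - t) by apply: Rmult_le_pos; lra.
  case: (I2_cases i) => ->; simp; rewrite /cA /cB.
  + have := sq_ge0 (u o0 - v o0). have := sq_ge0 (u o1 - v o1). move=> s1 s2.
    have hp : 0 <= t * (1 - t) * ((u o0 - v o0) * (u o0 - v o0) + (u o1 - v o1) * (u o1 - v o1)).
      apply: Rmult_le_pos => //; lra.
    nra.
  + have := sq_ge0 ((u o1 - u o0) - (v o1 - v o0)). move=> s1.
    have hp : 0 <= t * (1 - t) * (((u o1 - u o0) - (v o1 - v o0)) * ((u o1 - u o0) - (v o1 - v o0))).
      apply: Rmult_le_pos => //.
    nra.
Qed.

Lemma condC1 : condC (pol (/2)).
Proof.
move=> k w; case: (I2_cases k) => ->.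
- exists (fun _ => 0), (/2) => u. rewrite fsum_I2. simp. ring.
- exists (fun j => if j == o0 then 1 else 0), 0 => u. rewrite fsum_I2. simp. rewrite /o0 /o1. ring.
Qed.

Theorem proposition3p1 :
  forall nt : eq_notion,
  (* (i) *)
  (exists (G : game) (gD : policy G),
      partially_nested G /\ is_eq nt (PD G) gD /\
      (exists gS : policy G, admissible gS /\ static_rel gD gS) /\
      (forall gS : policy G, admissible gS -> static_rel gD gS ->
         ~ is_eq nt (PS G) gS)) /\
  (* (ii) *)
  (exists (G : game) (gS : policy G),
      partially_nested G /\ is_eq nt (PS G) gS /\
      exists gD : policy G,
        admissible gD /\ static_rel gD gS /\ ~ is_eq nt (PD G) gD) /\
  (* (iii) *)
  (exists (G : game) (gD : policy G),
      partially_nested G /\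
      (forall i w0, cont_diff (cost G i w0) /\ jointly_convex (cost G i w0)) /\
      condC gD /\
      is_eq nt (PD G) gD /\
      (exists gS : policy G, admissible gS /\ static_rel gD gS) /\
      (forall gS : policy G, admissible gS -> static_rel gD gS ->
         ~ is_eq nt (PS G) gS)).
Proof.
move=> nt; split; [|split].
- exists Gm, (pol (/2)); split; first exact: pn.
  split; first exact: D1_eq.
  split; first by exists (cpol (/2)); split; [exact: cpol_adm | exact: srel].
  move=> gS; exact: S1_not.
- exists Gm, (cpol 1); split; first exact: pn.
  split; first exact: S2_eq.
  exists (pol 1); split; first exact: pol_adm.
  split; first exact: srel. exact: D2_not.
- exists Gm, (pol (/2)); split; first exact: pn.
  split; first exact: costs_reg.
  split; first exact: condC1.
  split; first exact: D1_eq.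
  split; first by exists (cpol (/2)); split; [exact: cpol_adm | exact: srel].
  move=> gS; exact: S1_not.
Qed.
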